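(* Let $D\subset S^2$ be a convex body of constant diameter $\delta$. Then every two diametral chords of $D$ intersect.
   Context: $S^2$ is the unit sphere in $E^3$; for non-antipodal points $a,b$, the arc $ab$ is the shorter great-circle arc joining them and $|ab|$ is its length. A set containing no pair of antipodes is convex if it contains the arc joining any two of its points; a closed convex set with non-empty interior is a convex body. If $D$ has diameter $\delta$, an arc $pq$ with $p,q\in D$ and $|pq|=\delta$ is called a diametral chord of $D$. $D$ is of constant diameter $\delta$ if for every $p\in\mathrm{bd}(D)$ there exists $p'\in\mathrm{bd}(D)$ with $|pp'|=\delta$. *)

(* Defs.v *)
From Stdlib Require Import Reals Lra.
Open Scope R_scope.

Record pt := Pt { px : R; py : R; pz : R }.

Definition dot (a b : pt) : R := px a * px b + py a * py b + pz a * pz b.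
Definition padd (a b : pt) : pt := Pt (px a + px b) (py a + py b) (pz a + pz b).
Definition pscale (t : R) (a : pt) : pt := Pt (t * px a) (t * py a) (t * pz a).
Definition popp (a : pt) : pt := Pt (- px a) (- py a) (- pz a).
Definition edist (a b : pt) : R :=
  sqrt ((px a - px b)^2 + (py a - py b)^2 + (pz a - pz b)^2).

Definition S2 (a : pt) : Prop := dot a a = 1.

Definition sdist (a b : pt) : R := acos (dot a b).

Definition antipodal (a b : pt) : Prop := b = popp a.

(* The (shorter) great-circle arc ab, for non-antipodal a b on S^2:
   the points of S^2 lying in the cone spanned by a and b. *)
Definition arc (a b : pt) (x : pt) : Prop :=
  S2 x /\ exists al be : R, 0 <= al /\ 0 <= be /\ x = padd (pscale al a) (pscale be b).

Definition subS2 (D : pt -> Prop) : Prop := forall x, D x -> S2 x.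

Definition sconvex (D : pt -> Prop) : Prop :=
  subS2 D /\
  (forall a b, D a -> D b -> ~ antipodal a b) /\
  (forall a b x, D a -> D b -> arc a b x -> D x).

Definition sclosed (D : pt -> Prop) : Prop :=
  forall q, S2 q -> (forall eps, 0 < eps -> exists p, D p /\ edist p q < eps) -> D q.

Definition sinterior (D : pt -> Prop) (p : pt) : Prop :=
  D p /\ exists eps, 0 < eps /\ forall q, S2 q -> edist p q < eps -> D q.

Definition sboundary (D : pt -> Prop) (p : pt) : Prop :=
  D p /\ ~ sinterior D p.

Definition convex_body (D : pt -> Prop) : Prop :=
  sconvex D /\ sclosed D /\ exists p, sinterior D p.

Definition has_diameter (D : pt -> Prop) (delta : R) : Prop :=
  is_lub (fun d => exists p q, D p /\ D q /\ d = sdist p q) delta.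

Definition constant_diameter (D : pt -> Prop) (delta : R) : Prop :=
  has_diameter D delta /\
  forall p, sboundary D p -> exists p', sboundary D p' /\ sdist p p' = delta.

Definition diametral_chord (D : pt -> Prop) (delta : R) (p q : pt) : Prop :=
  D p /\ D q /\ sdist p q = delta.

(* Main.v *)
Require Import Defs.
From Stdlib Require Import Reals Lra Psatz Classical.
Open Scope R_scope.

Definition det3 (a b c : pt) : R :=
  px a*(py b*pz c - pz b*py c) - py a*(px b*pz c - pz b*px c) + pz a*(px b*py c - py b*px c).

Lemma pt_eq (a b : pt) : px a = px b -> py a = py b -> pz a = pz b -> a = b.
Proof. destruct a, b; simpl; intros; subst; reflexivity. Qed.

Lemma dot_comm a b : dot a b = dot b a.
Proof. unfold dot; ring. Qed.

Lemma dot_bounds a b : S2 a -> S2 b -> -1 <= dot a b <= 1.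
Proof. unfold S2, dot; destruct a as [a1 a2 a3], b as [b1 b2 b3]; simpl; intros.
  pose proof (Rle_0_sqr (a1+b1)); pose proof (Rle_0_sqr (a2+b2)); pose proof (Rle_0_sqr (a3+b3));
  pose proof (Rle_0_sqr (a1-b1)); pose proof (Rle_0_sqr (a2-b2)); pose proof (Rle_0_sqr (a3-b3)).
  unfold Rsqr in *. split; nra. Qed.

Lemma sq3_zero x y z : x^2+y^2+z^2 = 0 -> x = 0 /\ y = 0 /\ z = 0.
Proof. intros. pose proof (pow2_ge_0 x); pose proof (pow2_ge_0 y); pose proof (pow2_ge_0 z).
  assert (x^2=0) by lra. assert (y^2=0) by lra. assert (z^2=0) by lra.
  repeat split; nra. Qed.

Lemma dot1_eq a b : S2 a -> S2 b -> dot a b = 1 -> a = b.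
Proof. unfold S2, dot; destruct a as [a1 a2 a3], b as [b1 b2 b3]; simpl; intros.
  destruct (sq3_zero (a1-b1) (a2-b2) (a3-b3)) as [? [? ?]].
  { replace ((a1-b1)^2+(a2-b2)^2+(a3-b3)^2) with ((a1*a1+a2*a2+a3*a3)+(b1*b1+b2*b2+b3*b3) - 2*(a1*b1+a2*b2+a3*b3)) by ring. lra. }
  apply pt_eq; simpl; lra. Qed.

Lemma dotm1_eq a b : S2 a -> S2 b -> dot a b = -1 -> b = popp a.
Proof. unfold S2, dot; destruct a as [a1 a2 a3], b as [b1 b2 b3]; simpl; intros.
  destruct (sq3_zero (a1+b1) (a2+b2) (a3+b3)) as [? [? ?]].
  { replace ((a1+b1)^2+(a2+b2)^2+(a3+b3)^2) with ((a1*a1+a2*a2+a3*a3)+(b1*b1+b2*b2+b3*b3) + 2*(a1*b1+a2*b2+a3*b3)) by ring. lra. }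
  apply pt_eq; simpl; lra. Qed.

Lemma acos_le_inv x y : -1 <= x <= 1 -> -1 <= y <= 1 -> acos x <= acos y -> y <= x.
Proof. intros. pose proof (acos_bound x); pose proof (acos_bound y).
  rewrite <- (cos_acos x), <- (cos_acos y) by lra. apply cos_decr_1; lra. Qed.

Lemma acos_lt_inv x y : -1 <= x <= 1 -> -1 <= y <= 1 -> acos x < acos y -> y < x.
Proof. intros. pose proof (acos_bound x); pose proof (acos_bound y).
  rewrite <- (cos_acos x), <- (cos_acos y) by lra. apply cos_decreasing_1; lra. Qed.

Definition nrm (w : pt) := sqrt (dot w w).
Definition unitize (w : pt) := pscale (/ nrm w) w.

Lemma dot_pos w : w <> Pt 0 0 0 -> 0 < dot w w.
Proof. destruct w as [a b c]; unfold dot; simpl; intros.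
  destruct (Req_dec a 0); destruct (Req_dec b 0); destruct (Req_dec c 0); subst;
  try (exfalso; apply H; reflexivity); nra. Qed.

Lemma unitize_S2 w : 0 < dot w w -> S2 (unitize w).
Proof. intros. unfold S2, unitize, nrm.
  assert (E: dot (pscale (/ sqrt (dot w w)) w) (pscale (/ sqrt (dot w w)) w)
    = (/ sqrt (dot w w))^2 * dot w w) by (unfold dot; simpl; ring).
  rewrite E. rewrite pow_inv, <- Rsqr_pow2, Rsqr_sqrt by lra. field. lra. Qed.

Lemma dot_scale_l t a b : dot (pscale t a) b = t * dot a b.
Proof. unfold dot; simpl; ring. Qed.
Lemma dot_scale_r t a b : dot a (pscale t b) = t * dot a b.
Proof. unfold dot; simpl; ring. Qed.
Lemma dot_add_l a b c : dot (padd a b) c = dot a c + dot b c.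
Proof. unfold dot; simpl; ring. Qed.
Lemma dot_add_r a b c : dot c (padd a b) = dot c a + dot c b.
Proof. unfold dot; simpl; ring. Qed.

Lemma gram a o b : (det3 a o b)^2 = dot a a * dot o o * dot b b + 2 * dot a o * dot o b * dot a b
  - dot a a * (dot o b)^2 - dot o o * (dot a b)^2 - dot b b * (dot a o)^2.
Proof. unfold det3, dot; ring. Qed.

Lemma decomp p q w : pscale (dot p p * dot q q - (dot p q)^2) w =
  padd (padd (pscale (dot w p * dot q q - dot w q * dot p q) p)
             (pscale (dot w q * dot p p - dot w p * dot p q) q))
       (pscale (det3 p q w) (Pt (py p*pz q - pz p*py q) (pz p*px q - px p*pz q) (px p*py q - py p*px q))).
Proof. apply pt_eq; unfold dot, det3; simpl; ring. Qed.
Lemma tri_alg (x y z P : R) : 0 <= P -> P*P = (1-x*x)*(1-y*y) -> (1-x*x)*(1-y*y) - (z-x*y)^2 > 0 ->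
   z <= x*y - P -> False.
Proof. intros. nra. Qed.

Lemma tri_strict a o b : S2 a -> S2 o -> S2 b -> det3 a o b <> 0 ->
  sdist a b < sdist a o + sdist o b.
Proof. intros Ha Ho Hb Hd. unfold sdist.
  pose proof (dot_bounds a o Ha Ho) as Bx. pose proof (dot_bounds o b Ho Hb) as By.
  pose proof (dot_bounds a b Ha Hb) as Bz.
  pose proof (gram a o b) as G. unfold S2 in *. rewrite Ha, Ho, Hb in G.
  set (x := dot a o) in *. set (y := dot o b) in *. set (z := dot a b) in *.
  assert (Gp : (1-x*x)*(1-y*y) - (z-x*y)^2 > 0).
  { assert (0 < (det3 a o b)^2) by (simpl; rewrite Rmult_1_r; destruct (Rlt_or_le 0 (det3 a o b)); [nra|]; destruct H; [nra|contradiction]). nra. }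
  destruct (Rlt_or_le (acos z) (acos x + acos y)) as [|Hle]; [assumption|exfalso].
  pose proof (acos_bound x); pose proof (acos_bound y); pose proof (acos_bound z).
  assert (C: cos (acos z) <= cos (acos x + acos y)) by (apply cos_decr_1; lra).
  rewrite cos_plus, !cos_acos, !sin_acos in C by lra.
  apply (tri_alg x y z (sqrt (1 - x²) * sqrt (1 - y²))); auto.
  - apply Rmult_le_pos; apply sqrt_pos.
  - replace (sqrt (1 - x²) * sqrt (1 - y²) * (sqrt (1 - x²) * sqrt (1 - y²))) with
      ((sqrt (1 - x²) * sqrt (1 - x²)) * (sqrt (1 - y²) * sqrt (1 - y²))) by ring.
    rewrite !sqrt_sqrt; unfold Rsqr; nra.
Qed.
Definition comb al a be c := padd (pscale al a) (pscale be c).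

Lemma comb_dot_self al a be c : S2 a -> S2 c ->
  dot (comb al a be c) (comb al a be c) = al*al + be*be + 2*al*be*dot a c.
Proof. unfold S2, comb, dot; simpl; intros. nra. Qed.

Lemma comb_pos al a be c : S2 a -> S2 c -> -1 < dot a c -> 0 < al -> 0 < be ->
  0 < dot (comb al a be c) (comb al a be c).
Proof. intros. rewrite comb_dot_self by auto.
  assert (0 < al*be) by (apply Rmult_lt_0_compat; lra).
  assert (0 < al*be*(1+dot a c)) by (apply Rmult_lt_0_compat; lra).
  pose proof (pow2_ge_0 (al-be)). nra. Qed.

Lemma sin_acos_eq x v : -1 <= x <= 1 -> 0 <= v -> 1 - x*x = v*v -> sin (acos x) = v.
Proof. intros. rewrite sin_acos by lra. unfold Rsqr. rewrite H1. apply sqrt_Rsqr. auto. Qed.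

Lemma alg1 al be k N S: N*N = al*al+be*be+2*al*be*k -> S*S = 1-k*k -> 0<N ->
  1 - ((al+be*k)/N)*((al+be*k)/N) = (be*S/N)*(be*S/N).
Proof. intros. field_simplify_eq; [|lra]. replace (N^2) with (N*N) by ring. replace (S^2) with (S*S) by ring. rewrite H, H0. ring. Qed.
Lemma alg1' al be k N S: N*N = al*al+be*be+2*al*be*k -> S*S = 1-k*k -> 0<N ->
  1 - ((al*k+be)/N)*((al*k+be)/N) = (al*S/N)*(al*S/N).
Proof. intros. field_simplify_eq; [|lra]. replace (N^2) with (N*N) by ring. replace (S^2) with (S*S) by ring. rewrite H, H0. ring. Qed.
Lemma alg2 al be k N S: N*N = al*al+be*be+2*al*be*k -> S*S = 1-k*k -> 0<N ->
  (al+be*k)/N * ((al*k+be)/N) - be*S/N*(al*S/N) = k.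
Proof. intros. field_simplify_eq; [|lra]. replace (N^2) with (N*N) by ring. replace (S^2) with (S*S) by ring. rewrite H, H0. ring. Qed.
Lemma alg3 al be k N S: N*N = al*al+be*be+2*al*be*k -> 0<N ->
  be*S/N * ((al*k+be)/N) + (al+be*k)/N * (al*S/N) = S.
Proof. intros. field_simplify_eq; [|lra]. replace (N^2) with (N*N) by ring. rewrite H. ring. Qed.

Lemma arc_add a c al be : S2 a -> S2 c -> -1 < dot a c < 1 -> 0 < al -> 0 < be ->
  sdist a (unitize (comb al a be c)) + sdist (unitize (comb al a be c)) c = sdist a c.
Proof. intros Ha Hc Hk Hal Hbe.
  pose proof (comb_pos al a be c Ha Hc ltac:(lra) Hal Hbe) as Hw.
  pose proof (comb_dot_self al a be c Ha Hc) as Ew.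
  set (w := comb al a be c) in *. set (k := dot a c) in *.
  pose proof (unitize_S2 w Hw) as Ho.
  set (o := unitize w) in *.
  set (N := nrm w).
  assert (HN : 0 < N) by (apply sqrt_lt_R0; auto).
  assert (HNN : N * N = dot w w) by (apply sqrt_sqrt; lra).
  assert (Eao : dot a o = (al + be*k)/N).
  { unfold o, unitize; fold N. rewrite dot_scale_r. unfold w, comb. rewrite dot_add_r, !dot_scale_r.
    unfold S2 in Ha. rewrite Ha. fold k. field. lra. }
  assert (Eoc : dot o c = (al*k + be)/N).
  { unfold o, unitize; fold N. rewrite dot_scale_l. unfold w, comb. rewrite dot_add_l, !dot_scale_l.
    unfold S2 in Hc. rewrite Hc. fold k. field. lra. }
  pose proof (dot_bounds a o Ha Ho) as B1. pose proof (dot_bounds o c Ho Hc) as B2.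
  set (S := sqrt (1 - k*k)).
  assert (HS : 0 < S) by (apply sqrt_lt_R0; nra).
  assert (HSS : S * S = 1 - k*k) by (apply sqrt_sqrt; nra).
  rewrite Ew in HNN.
  assert (sA : sin (acos (dot a o)) = be*S/N).
  { apply sin_acos_eq; auto. apply Rmult_le_pos; [nra|]. left; apply Rinv_0_lt_compat; lra.
    rewrite Eao. apply alg1; auto. }
  assert (sB : sin (acos (dot o c)) = al*S/N).
  { apply sin_acos_eq; auto. apply Rmult_le_pos; [nra|]. left; apply Rinv_0_lt_compat; lra.
    rewrite Eoc. apply alg1'; auto. }
  assert (cAB : cos (acos (dot a o) + acos (dot o c)) = k).
  { rewrite cos_plus, !cos_acos by lra. rewrite sA, sB, Eao, Eoc. apply alg2; auto. }
  assert (sAB : sin (acos (dot a o) + acos (dot o c)) = S).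
  { rewrite sin_plus, !cos_acos by lra. rewrite sA, sB, Eao, Eoc. apply alg3; auto. }
  pose proof (acos_bound (dot a o)); pose proof (acos_bound (dot o c)).
  assert (Hle : acos (dot a o) + acos (dot o c) <= PI).
  { destruct (Rle_or_lt (acos (dot a o) + acos (dot o c)) PI) as [|Hgt]; auto. exfalso.
    destruct (Rlt_or_le (acos (dot a o) + acos (dot o c)) (2*PI)) as [Hlt|Hge].
    - pose proof (sin_lt_0 _ Hgt Hlt). lra.
    - assert (acos (dot a o) + acos (dot o c) = 2*PI) by lra. rewrite H1, sin_2PI in sAB. lra. }
  change (acos (dot a o) + acos (dot o c) = acos k).
  rewrite <- (acos_cos (acos (dot a o) + acos (dot o c))) by lra. rewrite cAB. reflexivity.
Qed.
Lemma sdist_comm a b : sdist a b = sdist b a.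
Proof. unfold sdist. rewrite dot_comm. reflexivity. Qed.

Lemma det_mid_scale a t x b : det3 a (pscale t x) b = t * det3 a x b.
Proof. unfold det3; simpl; ring. Qed.

Lemma cross_false (delta : R) a b c d al be ga ep :
  S2 a -> S2 b -> S2 c -> S2 d -> -1 < dot a c < 1 -> -1 < dot b d < 1 ->
  sdist a c <= delta -> sdist b d <= delta -> sdist a b = delta -> sdist c d = delta ->
  0 < al -> 0 < be -> 0 < ga -> 0 < ep ->
  comb al a be c = comb ga b ep d -> det3 a c b <> 0 -> det3 c b d <> 0 -> False.
Proof. intros Ha Hb Hc Hd Hac Hbd Dac Dbd Dab Dcd Hal Hbe Hga Hep E Ndet1 Ndet2.
  pose proof (arc_add a c al be Ha Hc Hac Hal Hbe) as A1.
  pose proof (arc_add b d ga ep Hb Hd Hbd Hga Hep) as A2.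
  pose proof (comb_pos al a be c Ha Hc ltac:(lra) Hal Hbe) as Hw.
  pose proof (unitize_S2 _ Hw) as Ho.
  rewrite <- E in A2.
  set (o := unitize (comb al a be c)) in *.
  assert (HN : 0 < nrm (comb al a be c)) by (apply sqrt_lt_R0; auto).
  assert (T1 : sdist a b < sdist a o + sdist o b).
  { apply tri_strict; auto. unfold o, unitize. rewrite det_mid_scale.
    replace (det3 a (comb al a be c) b) with (be * det3 a c b) by (unfold det3, comb; simpl; ring).
    apply Rmult_integral_contrapositive_currified. apply Rinv_neq_0_compat; lra.
    apply Rmult_integral_contrapositive_currified; lra. }
  assert (T2 : sdist c d < sdist c o + sdist o d).
  { apply tri_strict; auto. unfold o, unitize. rewrite E, det_mid_scale.
    replace (det3 c (comb ga b ep d) d) with (ga * det3 c b d) by (unfold det3, comb; simpl; ring).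
    apply Rmult_integral_contrapositive_currified. apply Rinv_neq_0_compat. rewrite <- E; lra.
    apply Rmult_integral_contrapositive_currified; lra. }
  rewrite (sdist_comm c o) in T2. rewrite (sdist_comm o b) in T1. lra.
Qed.
Lemma mon (a b k : R) : a < 0 -> 0 < b -> -1 < k < 1 -> 
  1 = a*a+b*b+2*a*b*k -> a + b*k < k.
Proof. intros. assert (E: 1 - (a+b*k)^2 = b^2*(1-k^2)) by nra.
  destruct (Rle_dec 0 k); destruct (Rle_dec b 1).
  - nra.
  - destruct (Rlt_dec (a+b*k) 0). lra.
    assert (h1: 0 < (b^2-1)*(1-k^2)) by (apply Rmult_lt_0_compat; nra).
    assert ((a+b*k)^2 < k^2) by nra. nra.
  - destruct (Rlt_dec b 1).
    + assert (a+b*k < 0) by nra.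
      assert (h1: 0 < (1-b^2)*(1-k^2)) by (apply Rmult_lt_0_compat; nra).
      assert ((a+b*k)^2 > k^2) by nra. nra.
    + assert (b = 1) by lra. subst. lra.
  - nra. Qed.

Definition diam_le (D : pt -> Prop) (delta : R) := forall a b, D a -> D b -> sdist a b <= delta.

Lemma comb_comm al a be c : comb al a be c = comb be c al a.
Proof. apply pt_eq; unfold comb; simpl; ring. Qed.

Lemma conv_S2 D x : sconvex D -> D x -> S2 x.
Proof. intros [H _] Hx. apply H, Hx. Qed.

Lemma k_range D p q : sconvex D -> D p -> D q -> p <> q -> -1 < dot p q < 1.
Proof. intros Hc Hp Hq Hne. pose proof (conv_S2 D p Hc Hp). pose proof (conv_S2 D q Hc Hq).
  pose proof (dot_bounds p q H H0). split.
  - destruct (Req_dec (dot p q) (-1)) as [E|]; [|lra]. exfalso.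
    destruct Hc as [_ [Hna _]]. apply (Hna p q Hp Hq). apply dotm1_eq; auto.
  - destruct (Req_dec (dot p q) 1) as [E|]; [|lra]. exfalso. apply Hne, dot1_eq; auto.
Qed.

Lemma nofar D delta p q x al be : sconvex D -> diam_le D delta -> D p -> D q -> D x ->
  sdist p q = delta -> p <> q -> x = comb al p be q -> al < 0 -> 0 <= be -> False.
Proof. intros Hc Hdm Hp Hq Hx Hpq Hne Ex Hal Hbe.
  pose proof (conv_S2 D p Hc Hp) as Sp. pose proof (conv_S2 D q Hc Hq) as Sq.
  pose proof (conv_S2 D x Hc Hx) as Sx.
  pose proof (k_range D p q Hc Hp Hq Hne) as Hk.
  pose proof (comb_dot_self al p be q Sp Sq) as Ew. rewrite <- Ex in Ew.
  unfold S2 in Sx. rewrite Sx in Ew.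
  destruct Hbe as [Hbe|Hbe].
  - pose proof (mon al be (dot p q) Hal Hbe Hk Ew) as M.
    assert (Epx : dot p x = al + be * dot p q).
    { rewrite Ex. unfold comb. rewrite dot_add_r, !dot_scale_r. unfold S2 in Sp. rewrite Sp. ring. }
    pose proof (Hdm p x Hp Hx) as L. rewrite <- Hpq in L. unfold sdist in L.
    apply acos_le_inv in L; try (apply dot_bounds; auto). lra.
  - subst be. assert (al = -1) by nra. subst al.
    destruct Hc as [_ [Hna _]]. apply (Hna p x Hp Hx). unfold antipodal. rewrite Ex.
    apply pt_eq; unfold comb; simpl; ring.
Qed.

Lemma Rmult_eq_reg_l' (y k : R) : 0 < 1 - k^2 -> y = ((1*1 - k*(k*1)) * y) / (1-k^2).
Proof. intros. field. lra. Qed.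

Lemma plane D delta p q x : sconvex D -> diam_le D delta -> D p -> D q -> D x ->
  sdist p q = delta -> p <> q -> det3 p q x = 0 ->
  exists al be, 0 <= al /\ 0 <= be /\ x = comb al p be q.
Proof. intros Hc Hdm Hp Hq Hx Hpq Hne Hdet.
  pose proof (conv_S2 D p Hc Hp) as Sp. pose proof (conv_S2 D q Hc Hq) as Sq.
  pose proof (conv_S2 D x Hc Hx) as Sx.
  pose proof (k_range D p q Hc Hp Hq Hne) as Hk.
  pose proof (decomp p q x) as E. unfold S2 in Sp, Sq. rewrite Sp, Sq, Hdet in E.
  set (k := dot p q) in *.
  set (al := (dot x p * 1 - dot x q * k) / (1 - k^2)).
  set (be := (dot x q * 1 - dot x p * k) / (1 - k^2)).
  assert (Hk2 : 0 < 1 - k^2) by nra.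
  assert (Ex : x = comb al p be q).
  { pose proof (f_equal px E) as E1. pose proof (f_equal py E) as E2. pose proof (f_equal pz E) as E3.
    simpl in E1, E2, E3. apply pt_eq; unfold comb, al, be; simpl.
    - rewrite (Rmult_eq_reg_l' (px x) k) by lra. rewrite E1. field. lra.
    - rewrite (Rmult_eq_reg_l' (py x) k) by lra. rewrite E2. field. lra.
    - rewrite (Rmult_eq_reg_l' (pz x) k) by lra. rewrite E3. field. lra. }
  clearbody al be.
  destruct (Rle_or_lt 0 al) as [Ha|Ha]; destruct (Rle_or_lt 0 be) as [Hb|Hb].
  - exists al, be; auto.
  - exfalso. apply (nofar D delta q p x be al Hc Hdm Hq Hp Hx); auto.
    rewrite sdist_comm; auto. rewrite comb_comm; auto.
  - exfalso. apply (nofar D delta p q x al be Hc Hdm Hp Hq Hx); auto.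
  - exfalso. destruct Hc as [HS [Hna Harc]].
    set (y := popp x).
    assert (Hy : D y).
    { apply (Harc p q y Hp Hq). split.
      - unfold S2, y, popp, dot in *; simpl. rewrite <- Sx. ring.
      - exists (-al), (-be). split; [lra|split; [lra|]].
        unfold y; rewrite Ex. apply pt_eq; unfold comb; simpl; ring. }
    apply (Hna x y Hx Hy). reflexivity.
Qed.
Lemma arc_comb a b al be : S2 (comb al a be b) -> 0 <= al -> 0 <= be -> arc a b (comb al a be b).
Proof. intros. split; auto. exists al, be. auto. Qed.

Lemma arc_left a b : S2 a -> arc a b a.
Proof. intros. split; auto. exists 1, 0. split; [lra|split; [lra|]]. apply pt_eq; simpl; ring. Qed.
Lemma arc_right a b : S2 b -> arc a b b.
Proof. intros. split; auto. exists 0, 1. split; [lra|split; [lra|]]. apply pt_eq; simpl; ring. Qed.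

Lemma det_comb p q a u b v : det3 p q (comb a u b v) = a * det3 p q u + b * det3 p q v.
Proof. unfold det3, comb; simpl; ring. Qed.

Lemma half D delta p q u v : sconvex D -> diam_le D delta -> D p -> D q -> D u -> D v ->
  sdist p q = delta -> sdist u v = delta -> p <> q -> u <> v ->
  det3 p q u * det3 p q v <= 0 -> exists x, arc p q x /\ arc u v x.
Proof. intros Hc Hdm Hp Hq Hu Hv Hpq Huv Hne1 Hne2 Hs.
  pose proof (conv_S2 D u Hc Hu) as Su. pose proof (conv_S2 D v Hc Hv) as Sv.
  destruct (Req_dec (det3 p q u) 0) as [E1|E1].
  { destruct (plane D delta p q u Hc Hdm Hp Hq Hu Hpq Hne1 E1) as [al [be [A [B Eu]]]].
    exists u. split; [|apply arc_left; auto]. rewrite Eu. apply arc_comb; auto. rewrite <- Eu; auto. }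
  destruct (Req_dec (det3 p q v) 0) as [E2|E2].
  { destruct (plane D delta p q v Hc Hdm Hp Hq Hv Hpq Hne1 E2) as [al [be [A [B Eu]]]].
    exists v. split; [|apply arc_right; auto]. rewrite Eu. apply arc_comb; auto. rewrite <- Eu; auto. }
  set (s1 := det3 p q u) in *. set (s2 := det3 p q v) in *.
  assert (Hw : 0 < dot (comb (Rabs s2) u (Rabs s1) v) (comb (Rabs s2) u (Rabs s1) v)).
  { apply comb_pos; auto. apply (k_range D u v); auto. apply Rabs_pos_lt; auto. apply Rabs_pos_lt; auto. }
  set (w := comb (Rabs s2) u (Rabs s1) v) in *.
  set (N := nrm w).
  assert (HN : 0 < N) by (apply sqrt_lt_R0; auto).
  assert (Ex : unitize w = comb (/N * Rabs s2) u (/N * Rabs s1) v).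
  { unfold unitize. fold N. unfold w, comb. apply pt_eq; simpl; ring. }
  assert (Sx : S2 (unitize w)) by (apply unitize_S2; auto).
  assert (Ax : arc u v (unitize w)).
  { rewrite Ex. apply arc_comb. rewrite <- Ex; auto.
    apply Rmult_le_pos; [left; apply Rinv_0_lt_compat; lra| apply Rabs_pos].
    apply Rmult_le_pos; [left; apply Rinv_0_lt_compat; lra| apply Rabs_pos]. }
  assert (Dx : D (unitize w)) by (destruct Hc as [_ [_ Harc]]; exact (Harc u v _ Hu Hv Ax)).
  assert (Hd : det3 p q (unitize w) = 0).
  { rewrite Ex. replace (det3 p q (comb (/ N * Rabs s2) u (/ N * Rabs s1) v))
      with (/N * (Rabs s2 * s1 + Rabs s1 * s2)) by (rewrite det_comb; unfold s1, s2; ring).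
    destruct (Rle_or_lt 0 s1); destruct (Rle_or_lt 0 s2).
    - assert (s1 = 0 \/ s2 = 0) by nra. tauto.
    - rewrite (Rabs_right s1), (Rabs_left s2) by lra. ring.
    - rewrite (Rabs_left s1), (Rabs_right s2) by lra. ring.
    - nra. }
  destruct (plane D delta p q (unitize w) Hc Hdm Hp Hq Dx Hpq Hne1 Hd) as [al [be [A [B Ew]]]].
  exists (unitize w). split; auto. rewrite Ew. apply arc_comb; auto. rewrite <- Ew; auto.
Qed.
Lemma degen D delta p u v : sconvex D -> diam_le D delta -> D p -> D u -> D v ->
  sdist p p = delta -> exists x, arc p p x /\ arc u v x.
Proof. intros Hc Hdm Hp Hu Hv Hd.
  pose proof (conv_S2 D p Hc Hp) as Sp.
  assert (Hd0 : delta = 0) by (rewrite <- Hd; unfold sdist; unfold S2 in Sp; rewrite Sp; apply acos_1).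
  assert (Hpu : forall z, D z -> z = p).
  { intros z Hz. pose proof (conv_S2 D z Hc Hz) as Sz. pose proof (Hdm p z Hp Hz) as L.
    rewrite Hd0, <- acos_1 in L. unfold sdist in L. apply acos_le_inv in L; [|apply dot_bounds; auto|lra].
    symmetry. apply dot1_eq; auto. pose proof (dot_bounds p z Sp Sz). lra. }
  rewrite (Hpu u Hu), (Hpu v Hv). exists p. split; apply arc_left; auto.
Qed.

Lemma main4 D delta p q u v : sconvex D -> diam_le D delta -> D p -> D q -> D u -> D v ->
  sdist p q = delta -> sdist u v = delta -> exists x, arc p q x /\ arc u v x.
Proof. intros Hc Hdm Hp Hq Hu Hv Hpq Huv.
  destruct (classic (p = q)) as [E|Hne1].
  { subst q. apply (degen D delta); auto. }
  destruct (classic (u = v)) as [E|Hne2].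
  { subst v. destruct (degen D delta u p q) as [x [A B]]; auto. exists x; auto. }
  destruct (Rle_or_lt (det3 p q u * det3 p q v) 0) as [Hs|Hs].
  { apply (half D delta); auto. }
  destruct (Rle_or_lt (det3 u v p * det3 u v q) 0) as [Ht|Ht].
  { destruct (half D delta u v p q) as [x [A B]]; auto. exists x; auto. }
  exfalso.
  pose proof (conv_S2 D p Hc Hp) as Sp. pose proof (conv_S2 D q Hc Hq) as Sq.
  pose proof (conv_S2 D u Hc Hu) as Su. pose proof (conv_S2 D v Hc Hv) as Sv.
  assert (N1 : det3 p q u <> 0) by (intro E; rewrite E in Hs; lra).
  assert (N2 : det3 p q v <> 0) by (intro E; rewrite E in Hs; lra).
  assert (N3 : det3 u v p <> 0) by (intro E; rewrite E in Ht; lra).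
  assert (N4 : det3 u v q <> 0) by (intro E; rewrite E in Ht; lra).
  assert (Npu : p <> u) by (intro E; subst u; apply N1; unfold det3; ring).
  assert (Nqv : q <> v) by (intro E; subst v; apply N2; unfold det3; ring).
  assert (Npv : p <> v) by (intro E; subst v; apply N2; unfold det3; ring).
  assert (Nqu : q <> u) by (intro E; subst u; apply N1; unfold det3; ring).
  assert (R1 : det3 p u q = - det3 p q u) by (unfold det3; ring).
  assert (R2 : det3 u q v = - det3 u v q) by (unfold det3; ring).
  assert (R3 : det3 p v q = - det3 p q v) by (unfold det3; ring).
  assert (R4 : det3 v q u = det3 u v q) by (unfold det3; ring).
  set (s1 := det3 p q u) in *. set (s2 := det3 p q v) in *.
  set (t1 := det3 u v p) in *. set (t2 := det3 u v q) in *.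
  assert (Dpu := Hdm p u Hp Hu). assert (Dqv := Hdm q v Hq Hv).
  assert (Dpv := Hdm p v Hp Hv). assert (Dqu := Hdm q u Hq Hu).
  assert (Kpu := k_range D p u Hc Hp Hu Npu). assert (Kqv := k_range D q v Hc Hq Hv Nqv).
  assert (Kpv := k_range D p v Hc Hp Hv Npv). assert (Kqu := k_range D q u Hc Hq Hu Nqu).
  assert (Hvu : sdist v u = delta) by (rewrite sdist_comm; auto).
  destruct (Rlt_or_le 0 t2) as [T2|T2]; destruct (Rlt_or_le 0 s2) as [S2'|S2'].
  - apply (cross_false delta p q u v t2 s2 t1 s1); auto; try nra.
    all: try (apply pt_eq; unfold comb, t1, t2, s1, s2, det3; simpl; ring).
    all: rewrite ?R1, ?R2, ?R3, ?R4; try lra.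
  - apply (cross_false delta p q v u t2 (-s1) t1 (-s2)); auto; try nra.
    all: try (apply pt_eq; unfold comb, t1, t2, s1, s2, det3; simpl; ring).
    all: rewrite ?R1, ?R2, ?R3, ?R4; try lra.
  - apply (cross_false delta p q v u (-t2) s1 (-t1) s2); auto; try nra.
    all: try (apply pt_eq; unfold comb, t1, t2, s1, s2, det3; simpl; ring).
    all: rewrite ?R1, ?R2, ?R3, ?R4; try lra.
  - apply (cross_false delta p q u v (-t2) (-s2) (-t1) (-s1)); auto; try nra.
    all: try (apply pt_eq; unfold comb, t1, t2, s1, s2, det3; simpl; ring).
    all: rewrite ?R1, ?R2, ?R3, ?R4; try lra.
Qed.

Theorem proposition2 (D : pt -> Prop) (delta : R) :
  convex_body D -> constant_diameter D delta ->
  forall p q p' q' : pt,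
    diametral_chord D delta p q -> diametral_chord D delta p' q' ->
    exists x, arc p q x /\ arc p' q' x.
Proof.
  intros [Hc _] [[Hub _] _] p q p' q' [Hp [Hq Hpq]] [Hp' [Hq' Hpq']].
  assert (Hdm : diam_le D delta).
  { intros a b Ha Hb. apply Hub. exists a, b. auto. }
  apply (main4 D delta); auto.
Qed.
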